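(* Let $f:\mathbb{R}^d\to\mathbb{R}$ be differentiable with a stochastic gradient oracle $\nabla f(x,\xi)$, and let $(x_t,z_t)_{t\ge0}$ be the continuized Nesterov process (see context) with constant parameters $\eta,\eta',\gamma,\gamma'$ satisfying $\eta+\eta'>0$. Define $\tilde y_k=x_{T_{k+1}^-}$, $\tilde x_k=x_{T_k}$, $\tilde z_k=z_{T_k}$ for $k\ge0$. Then for every $k\ge0$, with $\Delta_k=T_{k+1}-T_k$, $$\tilde y_k=(\tilde z_k-\tilde x_k)\frac{\eta}{\eta+\eta'}\big(1-e^{-(\eta+\eta')\Delta_k}\big)+\tilde x_k,\qquad \tilde x_{k+1}=\tilde y_k-\gamma\nabla f(\tilde y_k,\xi_{k+1}),$$ $$\tilde z_{k+1}=\tilde z_k+\eta'\frac{1-e^{-(\eta+\eta')\Delta_k}}{\eta'+\eta e^{-(\eta+\eta')\Delta_k}}(\tilde y_k-\tilde z_k)-\gamma'\nabla f(\tilde y_k,\xi_{k+1}).$$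
   Context: $(\Xi,\mathcal{P})$ is a probability space and $\nabla f(x,\xi)$ is measurable. Continuized Nesterov process: let $T_0=0$, $T_{k+1}-T_k$ ($k\ge0$) i.i.d. exponential with parameter $1$, and $\xi_1,\xi_2,\dots$ i.i.d. with law $\mathcal{P}$, independent of the $T_k$; $N=\sum_{k\ge1}\delta_{(T_k,\xi_k)}$. The càdlàg process $(x_t,z_t)$ starts at $x_0=z_0$ deterministic and solves $dx_t=\eta(z_t-x_t)dt-\gamma\int_\Xi\nabla f(x_{t^-},\xi)\,dN(t,\xi)$, $dz_t=\eta'(x_t-z_t)dt-\gamma'\int_\Xi\nabla f(x_{t^-},\xi)\,dN(t,\xi)$; i.e. between jump times $\dot x=\eta(z-x)$, $\dot z=\eta'(x-z)$, and at each $T_k$ ($k\ge1$) $x_{T_k}=x_{T_k^-}-\gamma\nabla f(x_{T_k^-},\xi_k)$, $z_{T_k}=z_{T_k^-}-\gamma'\nabla f(x_{T_k^-},\xi_k)$. Here $x_{T^-}$ denotes the left limit of $x$ at $T$. *)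

(* Defs.v *)
From HB Require Import structures.
From mathcomp Require Import all_boot all_order all_algebra.
From mathcomp Require Import all_classical all_reals all_analysis.
Set Implicit Arguments. Unset Strict Implicit. Unset Printing Implicit Defensive.
Import Order.TTheory GRing.Theory Num.Theory.
Import numFieldNormedType.Exports.
Local Open Scope classical_set_scope.
Local Open Scope ring_scope.

Definition left_lim {R : realType} {V : normedModType R} (f : R -> V) (t : R) : V :=
  lim (f @ t^'-).

Definition cadlag {R : realType} {V : normedModType R} (f : R -> V) : Prop :=
  (forall t : R, 0 <= t -> f @ t^'+ --> f t) /\
  (forall t : R, 0 < t -> cvg (f @ t^'-)).

(* Pathwise definition of the continuized Nesterov process driven by the
   marked point process N = sum_{k>=1} delta_{(T k, xi k)}:
   T 0 = 0, jump times strictly increasing, x_0 = z_0 = x0,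
   between jumps  x' = eta (z - x),  z' = eta' (x - z),
   at each T (k+1):  x jumps by -gamma grad f(x_{T^-}, xi (k+1)),
                     z jumps by -gamma' grad f(x_{T^-}, xi (k+1)). *)
Definition continuized_nesterov {R : realType} {d : nat} {Xi : Type}
  (gradf : 'rV[R]_d -> Xi -> 'rV[R]_d) (eta eta' gamma gamma' : R)
  (x0 : 'rV[R]_d) (T : nat -> R) (xi : nat -> Xi)
  (x z : R -> 'rV[R]_d) : Prop :=
  [/\ x 0 = x0 /\ z 0 = x0, cadlag x /\ cadlag z,
   (forall k t, T k < t < T k.+1 ->
      is_derive t 1 x (eta *: (z t - x t)) /\
      is_derive t 1 z (eta' *: (x t - z t))),
   (forall k, x (T k.+1) =
      left_lim x (T k.+1) - gamma *: gradf (left_lim x (T k.+1)) (xi k.+1)) &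
   (forall k, z (T k.+1) =
      left_lim z (T k.+1) - gamma' *: gradf (left_lim x (T k.+1)) (xi k.+1))].

(* Main.v *)
Require Import Defs.
From HB Require Import structures.
From mathcomp Require Import all_boot all_order all_algebra.
From mathcomp Require Import all_classical all_reals all_analysis.
From mathcomp Require Import ring lra.
Import Order.TTheory GRing.Theory Num.Theory.
Import numFieldNormedType.Exports.
Local Open Scope ring_scope.

Section Helpers.
Local Open Scope classical_set_scope.

Lemma ode_scalar (R : realType) (phi : R -> R) (c a b : R) :
  (forall t, a < t < b -> is_derive t 1 phi (c * phi t)) ->
  phi @ a^'+ --> phi a ->
  forall t, a < t < b -> phi t = phi a * expR (c * (t - a)).
Proof.
move=> Hd Hc.
pose g := fun t : R => expR (- (c * t)).
have dg : forall t : R, is_derive t 1 g (- c * g t).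
  move=> t; rewrite mulrC.
  apply: (is_derive1_comp (f := expR) (g := fun t => - (c * t))).
  have h : is_derive t 1 (fun t : R => - (c * t)) (- (c *: (1:R))).
    have h0 : is_derive t 1 (c \*: (@id R)) (c *: 1) := is_deriveZ c (is_derive_id t 1).
    exact: (is_deriveN h0).
  apply: (is_derive_eq h); congr (- _); exact: mulr1.
pose psi := fun t => phi t * g t.
have dpsi : forall t, a < t < b -> is_derive t 1 psi 0.
  move=> t ht.
  have h := is_deriveM (Hd t ht) (dg t).
  have E : phi t *: (-c * g t) + g t *: (c * phi t) = 0.
    rewrite /GRing.scale /=. ring.
  by rewrite E in h.
have cst : forall s t, a < s -> s <= t -> t < b -> psi s = psi t.
  move=> s t hs hst htb.
  case: (ltgtP s t) hst => // [lst|->] _; last by [].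
  have := @MVT R psi (fun _ => 0) s t lst.
  case.
  - move=> y; rewrite in_itv /= => /andP[h1 h2]; apply: dpsi.
    by rewrite (lt_trans hs h1) (lt_trans h2 htb).
  - apply: derivable_within_continuous => y; rewrite in_itv /= => /andP[h1 h2].
    have H : a < y < b by rewrite (lt_le_trans hs h1) (le_lt_trans h2 htb).
    by case: (dpsi y H).
  move=> y _; rewrite mul0r => /eqP; rewrite subr_eq0 => /eqP ->. by [].
have Hpsi : psi @ a^'+ --> psi a.
  apply: cvgM; first exact: Hc.
  apply: cvg_at_right_filter.
  have [h _] := dg a.
  exact/differentiable_continuous/derivable1_diffP.
move=> t /andP[hat htb].
have Hpsi' : psi @ a^'+ --> psi t.
  apply: cvg_near_cst.
  near=> s. apply: cst.
  - by near: s; exact: nbhs_right_gt.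
  - apply/ltW; by near: s; exact: nbhs_right_lt.
  - by [].
have E : psi a = psi t.
  exact: (cvg_unique _ Hpsi Hpsi').
move: E; rewrite /psi /g => E.
have ne : expR (- (c * t)) != 0 by rewrite gt_eqF // expR_gt0.
apply: (mulIf ne). rewrite -E -mulrA -expRD. congr (_ * expR _). ring.
Unshelve. all: by end_near.
Qed.


Lemma comp_derive {R : realType} {d : nat} (X : R -> 'rV[R]_d) (t : R) (v : 'rV[R]_d) (j : 'I_d) :
  is_derive t 1 X v -> is_derive t 1 (fun s => X s ord0 j) (v ord0 j).
Proof.
case=> dX dv.
have dij := (derivable_mxP X t 1).1 dX ord0 j.
have h := derivableP dij.
apply: (is_derive_eq h).
by rewrite -dv (derive_mx dX) mxE.
Qed.

Lemma comp_cvg {R : realType} {d : nat} (X : R -> 'rV[R]_d) (F : set_system R) {FF : Filter F} (l : 'rV[R]_d) (j : 'I_d) :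
  X @ F --> l -> (fun s => X s ord0 j) @ F --> l ord0 j.
Proof.
move=> H; exact: (cvg_comp _ _ H (@coord_continuous R 1 d ord0 j l)).
Qed.

Lemma lin2_derive {R : realType} (f g : R -> R) (t df dg al be : R) :
  is_derive t 1 f df -> is_derive t 1 g dg ->
  is_derive t 1 (fun s => al * f s + be * g s) (al * df + be * dg).
Proof.
move=> hf hg.
exact: (is_deriveD (is_deriveZ al hf) (is_deriveZ be hg)).
Qed.

Lemma lin2_cvg {R : realType} (f g : R -> R) (F : set_system R) {FF : Filter F} (l1 l2 al be : R) :
  f @ F --> l1 -> g @ F --> l2 ->
  (fun s => al * f s + be * g s) @ F --> al * l1 + be * l2.
Proof.
move=> hf hg.
apply: cvgD; apply: cvgM => //; exact: cvg_cst.
Qed.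


Lemma contF {R : realType} {d : nat} (p w : 'rV[R]_d) (al c a b : R) :
  (fun t => p + (al * (1 - expR (c * (t - a)))) *: w) @ b -->
  (p + (al * (1 - expR (c * (b - a)))) *: w).
Proof.
apply: cvgD; first exact: cvg_cst.
apply: cvgZ; last exact: cvg_cst.
apply: cvgM; first exact: cvg_cst.
apply: cvgB; first exact: cvg_cst.
apply: (cvg_comp (fun t => c * (t - a)) expR _ (@continuous_expR R _)).
apply: cvgM; first exact: cvg_cst.
apply: cvgB; [exact: cvg_id | exact: cvg_cst].
Qed.

End Helpers.
Arguments ode_scalar {R phi c a b} _ _ t _.
Arguments comp_derive {R d X t v} j _.
Arguments comp_cvg {R d X F FF l} j _.
Arguments lin2_derive {R f g t df dg} al be _ _.
Arguments lin2_cvg {R f g F FF l1 l2} al be _ _.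

Theorem proposition2 (R : realType) (d : nat) (Xi : Type)
  (f : 'rV[R]_d -> R) (gradf : 'rV[R]_d -> Xi -> 'rV[R]_d)
  (eta eta' gamma gamma' : R) (x0 : 'rV[R]_d)
  (T : nat -> R) (xi : nat -> Xi) (x z : R -> 'rV[R]_d) :
  (forall p : 'rV[R]_d, differentiable f p) ->
  0 < eta + eta' ->
  T 0 = 0 ->
  (forall k, T k < T k.+1) ->
  continuized_nesterov gradf eta eta' gamma gamma' x0 T xi x z ->
  forall k : nat,
    let Delta := T k.+1 - T k in
    let e := expR (- (eta + eta') * Delta) in
    let ty := left_lim x (T k.+1) in
    let tx := x (T k) in
    let tz := z (T k) in
    [/\ ty = (eta / (eta + eta') * (1 - e)) *: (tz - tx) + tx,
        x (T k.+1) = ty - gamma *: gradf ty (xi k.+1) &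
        (eta' + eta * e != 0 ->
         z (T k.+1) = tz + (eta' * (1 - e) / (eta' + eta * e)) *: (ty - tz)
                         - gamma' *: gradf ty (xi k.+1))].

Proof.
move=> _ hL T0 Tinc [[x0e z0e] [[xr _] [zr _]] Hd Hx Hz] k Delta e ty tx tz.
have Tge0 : forall n, 0 <= T n.
  elim=> [|n IH]; first by rewrite T0.
  exact: (le_trans IH (ltW (Tinc n))).
have hab := Tinc k.
have L0 : eta + eta' != 0 by rewrite gt_eqF.
have xra := xr (T k) (Tge0 k).
have zra := zr (T k) (Tge0 k).
have Es : forall j t, T k < t < T k.+1 ->
    eta' * x t ord0 j + eta * z t ord0 j = eta' * tx ord0 j + eta * tz ord0 j.
  move=> j t ht.
  have H1 : forall s, T k < s < T k.+1 -> is_derive s 1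
      (fun s => eta' * x s ord0 j + eta * z s ord0 j)
      (0 * (eta' * x s ord0 j + eta * z s ord0 j)).
    move=> s hs; have [dx dz] := Hd k s hs.
    have := lin2_derive eta' eta (comp_derive j dx) (comp_derive j dz).
    move=> h; apply: (is_derive_eq h); rewrite !mxE; ring.
  rewrite (ode_scalar H1 _ t ht) ?mul0r ?expR0 ?mulr1 //.
  exact: (lin2_cvg eta' eta (comp_cvg j xra) (comp_cvg j zra)).
have Eu : forall j t, T k < t < T k.+1 ->
    1 * x t ord0 j + (-1) * z t ord0 j =
    (1 * tx ord0 j + (-1) * tz ord0 j) * expR (- (eta + eta') * (t - T k)).
  move=> j t ht.
  have H1 : forall s, T k < s < T k.+1 -> is_derive s 1
      (fun s => 1 * x s ord0 j + (-1) * z s ord0 j)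
      (- (eta + eta') * (1 * x s ord0 j + (-1) * z s ord0 j)).
    move=> s hs; have [dx dz] := Hd k s hs.
    have := lin2_derive 1 (-1) (comp_derive j dx) (comp_derive j dz).
    move=> h; apply: (is_derive_eq h); rewrite !mxE; ring.
  rewrite (ode_scalar H1 _ t ht) //.
  exact: (lin2_cvg 1 (-1) (comp_cvg j xra) (comp_cvg j zra)).
pose Fx := fun t => tx + (eta / (eta + eta') * (1 - expR (- (eta + eta') * (t - T k)))) *: (tz - tx).
pose Fz := fun t => tz + (eta' / (eta + eta') * (1 - expR (- (eta + eta') * (t - T k)))) *: (tx - tz).
have Ex : forall t, T k < t < T k.+1 -> x t = Fx t.
  move=> t ht; apply/matrixP => i j.
  have -> : i = ord0 by apply: val_inj; case: i => [[|n]] //.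
  rewrite /Fx !mxE.
  have h1 := Es j t ht; have h2 := Eu j t ht.
  have -> : x t ord0 j = ((eta' * x t ord0 j + eta * z t ord0 j) + eta * (1 * x t ord0 j + (-1) * z t ord0 j)) / (eta+eta') by field.
  by rewrite h1 h2; field.
have Ez : forall t, T k < t < T k.+1 -> z t = Fz t.
  move=> t ht; apply/matrixP => i j.
  have -> : i = ord0 by apply: val_inj; case: i => [[|n]] //.
  rewrite /Fz !mxE.
  have h1 := Es j t ht; have h2 := Eu j t ht.
  have -> : z t ord0 j = ((eta' * x t ord0 j + eta * z t ord0 j) - eta' * (1 * x t ord0 j + (-1) * z t ord0 j)) / (eta+eta') by field.
  by rewrite h1 h2; field.
have Lx : left_lim x (T k.+1) = Fx (T k.+1).
  rewrite /left_lim; apply: cvg_lim; first exact: norm_hausdorff.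
  have cF : (Fx @ (T k.+1)^'- --> Fx (T k.+1))%classic :=
    cvg_at_left_filter (contF tx (tz - tx) (eta / (eta + eta')) (- (eta + eta')) (T k) (T k.+1)).
  apply: (cvg_trans _ cF).
  apply: near_eq_cvg; near=> u; apply/esym/Ex.
  apply/andP; split.
  - by near: u; exact: nbhs_left_gt.
  - by near: u; exact: nbhs_left_lt.
have Lz : left_lim z (T k.+1) = Fz (T k.+1).
  rewrite /left_lim; apply: cvg_lim; first exact: norm_hausdorff.
  have cF : (Fz @ (T k.+1)^'- --> Fz (T k.+1))%classic :=
    cvg_at_left_filter (contF tz (tx - tz) (eta' / (eta + eta')) (- (eta + eta')) (T k) (T k.+1)).
  apply: (cvg_trans _ cF).
  apply: near_eq_cvg; near=> u; apply/esym/Ez.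
  apply/andP; split.
  - by near: u; exact: nbhs_left_gt.
  - by near: u; exact: nbhs_left_lt.
rewrite /e /Delta.
split.
- by rewrite /ty Lx /Fx addrC.
- exact: Hx.
- move=> hne; rewrite Hz /ty Lz Lx /Fz /Fx.
  apply/matrixP => i j; rewrite !mxE.
  field; rewrite L0 /=; exact: hne.
Unshelve. all: by end_near.
Qed.
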